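(* For $\xi_1,\xi_2\in\mathbb R$ let $W=\mathrm{diag}\{\xi_1,\dots,\xi_1,0,-\xi_2\}\in\mathbb R^{(d+2)\times(d+2)}$ ($\xi_1$ repeated $d$ times). Then the loss $L(W)$ equals, up to the constant factor $\tfrac12$, $$\mathcal L(\xi_1,\xi_2):=\mathbb E\bigg[\bigg(\frac{\sum_{j=1}^N\exp(\xi_1\langle x_j,x_{N+1}\rangle)y_j}{\sum_{i=1}^N\exp(\xi_1\langle x_i,x_{N+1}\rangle)+\exp(\xi_1-\xi_2)}-y_{i^*}\bigg)^2\bigg],$$ and $\mathcal L$ is not a convex function of $(\xi_1,\xi_2)$.
   Context: Setting: $d,N\ge1$; prompt $x_1,\dots,x_N\in\mathbb R^d$, labels $y_1,\dots,y_N\in\mathbb R$, query $x_{N+1}$. Embedding $h_j=(x_j^\top,y_j,0)^\top$ ($j\le N$), $h_{N+1}=(x_{N+1}^\top,0,1)^\top$. For $W\in\mathbb R^{(d+2)\times(d+2)}$, $\hat y_W(x_{N+1})=\sum_{j=1}^N y_j\exp(h_j^\top Wh_{N+1})/\sum_{j=1}^{N+1}\exp(h_j^\top Wh_{N+1})$. $i^*=\arg\min_{j\in[N]}\|x_{N+1}-x_j\|_2$. Training distribution: $x_1,\dots,x_{N+1}$ i.i.d. uniform on $\mathbb S^{d-1}$; $\mathbb E[y_iy_j\mid x_{1:N}]=0$ ($i\ne j$), $\mathbb E[y_i^2\mid x_{1:N}]=1$, $\mathbb P(y_{1:N}\mid x_{1:N})=\mathbb P(y_{1:N}\mid -x_{1:N})$.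 Loss $L(W)=\frac12\mathbb E[(\hat y_W(x_{N+1})-y_{i^*})^2]$. *)

(* Defs.v *)
From HB Require Import structures.
From mathcomp Require Import all_boot all_order all_algebra.
From mathcomp Require Import all_classical all_reals all_analysis.
Set Implicit Arguments. Unset Strict Implicit. Unset Printing Implicit Defensive.
Import Order.TTheory GRing.Theory Num.Theory.
Local Open Scope classical_set_scope.
Local Open Scope ring_scope.

Section Defs.
Variable R : realType.

Definition dotp (d : nat) (x z : d.-tuple R) : R :=
  \sum_(i < d) tnth x i * tnth z i.
Definition tnorm (d : nat) (x : d.-tuple R) : R := Num.sqrt (dotp x x).
Definition tsub (d : nat) (x z : d.-tuple R) : d.-tuple R :=
  [tuple tnth x i - tnth z i | i < d].
Definition topp (d : nat) (x : d.-tuple R) : d.-tuple R := [tuple - tnth x i | i < d].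
Definition tdist (d : nat) (x z : d.-tuple R) : R := tnorm (tsub x z).

Fixpoint iint (n : nat) : (n.-tuple R -> \bar R) -> \bar R :=
  match n return (n.-tuple R -> \bar R) -> \bar R with
  | 0 => fun f => f [tuple]
  | n'.+1 => fun f =>
      (\int[@lebesgue_measure R]_t iint (fun s : n'.-tuple R => f (cons_tuple t s)))%E
  end.

(* cone measure: sigma(A) = vol{ r u : 0 < r <= 1, u in A } / vol(unit ball) *)
Definition tnormalize (d : nat) (x : d.-tuple R) : d.-tuple R :=
  [tuple tnth x i / tnorm x | i < d].
Definition cone (d : nat) (A : set (d.-tuple R)) : set (d.-tuple R) :=
  [set x | 0 < tnorm x <= 1 /\ A (tnormalize x)].
Definition unit_ball (d : nat) : set (d.-tuple R) := [set x | tnorm x <= 1].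
Definition sphere_unif (d : nat) (A : set (d.-tuple R)) : \bar R :=
  (iint (fun x : d.-tuple R => (\1_(cone A) x)%:E) *
   ((fine (iint (fun x : d.-tuple R => (\1_(@unit_ball d) x)%:E)))^-1)%:E)%E.

Definition emb (d : nat) (x : d.-tuple R) (a b : R) : 'cV[R]_(d.+2) :=
  \col_(k < d.+2) (if (k < d)%N then nth 0 (tval x) k
                   else if (k : nat) == d then a else b).
Definition score (d : nat) (W : 'M[R]_(d.+2)) (h h' : 'cV[R]_(d.+2)) : R :=
  ((h^T *m W *m h') 0 0).

Definition yhat (d N : nat) (W : 'M[R]_(d.+2)) (xs : N.-tuple (d.-tuple R))
    (ys : N.-tuple R) (xq : d.-tuple R) : R :=
  let hq := emb xq 0 1 in
  (\sum_(j < N) tnth ys j * expR (score W (emb (tnth xs j) (tnth ys j) 0) hq)) /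
  (\sum_(j < N) expR (score W (emb (tnth xs j) (tnth ys j) 0) hq)
     + expR (score W hq hq)).

(* i^* = argmin_j ||x_{N+1} - x_j||_2 (ties broken by the smallest index),
   as a 0-based index *)
Definition istar (d N : nat) (xs : N.-tuple (d.-tuple R)) (xq : d.-tuple R) : nat :=
  find (fun j : 'I_N =>
          [forall k : 'I_N, tdist xq (tnth xs j) <= tdist xq (tnth xs k)])
       (enum 'I_N).
Definition ystar (d N : nat) (xs : N.-tuple (d.-tuple R)) (ys : N.-tuple R)
    (xq : d.-tuple R) : R := nth 0 (tval ys) (istar xs xq).

Definition Wdiag (d : nat) (xi1 xi2 : R) : 'M[R]_(d.+2) :=
  \matrix_(i < d.+2, j < d.+2)
    (if i == j then (if (i < d)%N then xi1 else if (i : nat) == d then 0 else - xi2)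
     else 0).

(* X i : the random vector x_{i+1}, i : 'I_(N+1); the query is X ord_max.
   Y j : the random label y_{j+1}, j : 'I_N. *)
Section Data.
Context (d N : nat) {dT : measure_display} {T : measurableType dT}.
Variables (X : 'I_N.+1 -> T -> d.-tuple R) (Y : 'I_N -> T -> R).
Definition Xp (w : T) : N.-tuple (d.-tuple R) :=
  [tuple X (widen_ord (leqnSn N) j) w | j < N].
Definition Xq (w : T) : d.-tuple R := X ord_max w.
Definition Yt (w : T) : N.-tuple R := [tuple Y j w | j < N].
Definition XpN (w : T) : N.-tuple (d.-tuple R) := [tuple topp (tnth (Xp w) j) | j < N].
End Data.

Definition loss (d N : nat) {dT : measure_display} {T : measurableType dT}
    (P : probability T R) (X : 'I_N.+1 -> T -> d.-tuple R) (Y : 'I_N -> T -> R)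
    (W : 'M[R]_(d.+2)) : \bar R :=
  ((2^-1)%:E * \int[P]_w
     ((yhat W (Xp X w) (Yt Y w) (Xq X w) - ystar (Xp X w) (Yt Y w) (Xq X w)) ^+ 2)%:E)%E.

Definition calL (d N : nat) {dT : measure_display} {T : measurableType dT}
    (P : probability T R) (X : 'I_N.+1 -> T -> d.-tuple R) (Y : 'I_N -> T -> R)
    (xi1 xi2 : R) : R :=
  fine (\int[P]_w
    (((\sum_(j < N) expR (xi1 * dotp (tnth (Xp X w) j) (Xq X w)) * Y j w) /
      (\sum_(i < N) expR (xi1 * dotp (tnth (Xp X w) i) (Xq X w)) + expR (xi1 - xi2))
      - ystar (Xp X w) (Yt Y w) (Xq X w)) ^+ 2)%:E)%E.

End Defs.

(* Main.v *)
Require Import Defs.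
From HB Require Import structures.
From mathcomp Require Import all_boot all_order all_algebra.
From mathcomp Require Import all_classical all_reals all_analysis.
From mathcomp Require Import measurable_realfun.
From mathcomp Require Import ring lra.
Import Order.TTheory GRing.Theory Num.Theory.
Set Implicit Arguments. Unset Strict Implicit.
Local Open Scope classical_set_scope.
Local Open Scope ring_scope.

Section Aux.
Variable R : realType.

Lemma measurable_invR : measurable_fun setT (@GRing.inv R).
Proof.
rewrite (_ : GRing.inv = fun x : R => if x == 0 then 0 else x^-1); last first.
  by apply/funext => x; case: eqP => // ->; rewrite invr0.
apply: measurable_fun_if => //.
- exact: measurable_fun_eqr.
- apply: open_continuous_measurable_fun.
  + rewrite (_ : _ `&` _ = [set x | x != 0]); first exact: open_neq.
    by apply/seteqP; split => x /=; [case => _ /negbT|move=> /negbTE ->].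
  + move=> x; rewrite inE /= => -[_ /negbT x0]; exact: inv_continuous.
Qed.

Lemma iint0 n : iint (fun _ : n.-tuple R => 0%:E) = 0%E.
Proof.
elim: n => [//|n IH] /=.
by rewrite IH integral0.
Qed.

Lemma nth_sum N (ys : N.-tuple R) (i : nat) :
  nth 0 (tval ys) i = \sum_(k < N) ((i == k)%:R * tnth ys k).
Proof.
case: (ltnP i N) => h.
  rewrite (bigD1 (Ordinal h)) //= eqxx mul1r big1 ?addr0; first by rewrite (tnth_nth 0).
  move=> k; rewrite -val_eqE /= eq_sym => /negbTE ->; by rewrite mul0r.
rewrite nth_default ?size_tuple // big1 // => k _.
have: (i != k) by rewrite neq_ltn (leq_trans (ltn_ord k) h) orbT.
by move/negbTE ->; rewrite mul0r.
Qed.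

Lemma dotp_ge0 d (x : d.-tuple R) : 0 <= dotp x x.
Proof. by apply: sumr_ge0 => i _; rewrite -expr2 sqr_ge0. Qed.

Lemma dotp_normalize d (x : d.-tuple R) : 0 < tnorm x ->
  dotp (tnormalize x) (tnormalize x) = 1.
Proof.
rewrite /tnorm => h.
have hd : 0 < dotp x x by rewrite -sqrtr_gt0.
rewrite /dotp.
under eq_bigr do rewrite !tnth_mktuple -expr2 expr_div_n.
rewrite -mulr_suml sqr_sqrtr ?dotp_ge0 //.
rewrite (_ : \sum_(i < d) tnth x i ^+ 2 = dotp x x); last first.
  by apply: eq_bigr => i _; rewrite expr2.
by rewrite divff // gt_eqF.
Qed.

Lemma score_diag d xi1 xi2 (x z : d.-tuple R) (a b a' b' : R) :
  score (Wdiag d xi1 xi2) (emb x a b) (emb z a' b') = xi1 * dotp x z - xi2 * b * b'.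
Proof.
rewrite /score !mxE.
have inner : forall k, \sum_j (emb x a b)^T 0 j * Wdiag d xi1 xi2 j k =
   (emb x a b) k 0 * Wdiag d xi1 xi2 k k.
  move=> k; rewrite (bigD1 k) //= big1 ?addr0; first by rewrite mxE.
  by move=> j /negbTE jk; rewrite [Wdiag _ _ _ j k]mxE jk mulr0.
under eq_bigr do rewrite mxE inner.
rewrite !big_ord_recr /= !mxE /= eqxx ltnn.
rewrite (_ : (d.+1 < d)%N = false); last by rewrite ltnNge leqW.
rewrite (_ : (d.+1 == d) = false); last by rewrite gtn_eqF.
rewrite !eqxx mulr0 mul0r addr0 /dotp mulr_sumr.
congr (_ + _); last by ring.
apply: eq_bigr => i _; rewrite !mxE /= eqxx ltn_ord -!tnth_nth; ring.
Qed.

End Aux.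

Section Meas.
Variable R : realType.
Context {d0 : measure_display} {T0 : measurableType d0}.

Lemma mtnth n (f : T0 -> n.-tuple R) (i : 'I_n) : measurable_fun setT f ->
  measurable_fun setT (fun w => tnth (f w) i).
Proof. by move=> mf; exact: (measurableT_comp (measurable_tnth i) mf). Qed.

Lemma mdot n (f g : T0 -> n.-tuple R) : measurable_fun setT f -> measurable_fun setT g ->
  measurable_fun setT (fun w => dotp (f w) (g w)).
Proof.
move=> mf mg; rewrite /dotp; apply: measurable_sum => i.
by apply: measurable_funM; apply: mtnth.
Qed.

Lemma mtsub n (f g : T0 -> n.-tuple R) : measurable_fun setT f -> measurable_fun setT g ->
  measurable_fun setT (fun w => tsub (f w) (g w)).
Proof.
move=> mf mg; apply/measurable_fun_tnthP => i /=.
rewrite (_ : _ \o _ = fun w => tnth (f w) i - tnth (g w) i); last first.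
  by apply/funext => w /=; rewrite tnth_mktuple.
by apply: measurable_funB; apply: mtnth.
Qed.

Lemma mtdist n (f g : T0 -> n.-tuple R) : measurable_fun setT f -> measurable_fun setT g ->
  measurable_fun setT (fun w => tdist (f w) (g w)).
Proof.
move=> mf mg; rewrite /tdist /tnorm.
apply: measurableT_comp; first exact: continuous_measurable_fun (@sqrt_continuous R).
by apply: mdot; apply: mtsub.
Qed.

Lemma measurable_has (A : Type) (s : seq A) (G : A -> T0 -> bool) :
  (forall a, measurable_fun setT (G a)) -> measurable_fun setT (fun w => has (G^~ w) s).
Proof.
elim: s => [|a s IH] h /=; first exact: measurable_cst.
by apply: measurable_or; [exact: h|exact: IH].
Qed.

Lemma measurable_all (A : Type) (s : seq A) (G : A -> T0 -> bool) :
  (forall a, measurable_fun setT (G a)) -> measurable_fun setT (fun w => all (G^~ w) s).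
Proof.
elim: s => [|a s IH] h /=; first exact: measurable_cst.
by apply: measurable_and; [exact: h|exact: IH].
Qed.

Lemma measurable_ffun_bool (I : finType) (b : I -> T0 -> bool)
    (F : {ffun I -> bool} -> bool) :
  (forall i, measurable_fun setT (b i)) ->
  measurable_fun setT (fun w => F [ffun i => b i w]).
Proof.
move=> mb.
rewrite (_ : (fun w => _) = fun w => has (fun f => F f && all (fun i => b i w == f i) (enum I))
   (enum {ffun I -> bool})); last first.
  apply/funext => w; apply/idP/idP.
  - move=> Fw; apply/hasP; exists [ffun i => b i w]; first by rewrite mem_enum.
    by rewrite Fw; apply/allP => i _; rewrite ffunE.
  - move/hasP => [f _ /andP[Ff /allP H]].
    suff -> : [ffun i => b i w] = f by [].
    by apply/ffunP => i; rewrite ffunE; apply/eqP/H; rewrite mem_enum.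
apply: measurable_has => f; apply: measurable_and; first exact: measurable_cst.
apply: measurable_all => i; case: (f i).
- by under eq_fun do rewrite eqb_id; exact: mb.
- by under eq_fun do rewrite eqbF_neg; exact: measurable_neg.
Qed.

Lemma mboolR (b : T0 -> bool) : measurable_fun setT b ->
  measurable_fun setT (fun w => (b w)%:R : R).
Proof.
move=> mb; rewrite (_ : (fun w => _) = fun w => if b w then 1 else 0); last first.
  by apply/funext => w; case: (b w).
exact: measurable_fun_ifT.
Qed.

End Meas.

Section Main.
Context (R : realType) (d N : nat) (dT : measure_display) (T : measurableType dT)
  (X : 'I_N.+1 -> T -> d.-tuple R) (Y : 'I_N -> T -> R).
Hypothesis hXm : forall i, measurable_fun setT (X i).
Hypothesis hYm : forall j, measurable_fun setT (Y j).

Lemma mXp j : measurable_fun setT (fun w => tnth (Xp X w) j).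
Proof.
rewrite (_ : (fun w => _) = X (widen_ord (leqnSn N) j)); first exact: hXm.
by apply/funext => w; rewrite tnth_mktuple.
Qed.

Lemma mXq : measurable_fun setT (Xq X).
Proof. exact: hXm. Qed.

Lemma mistar (k : nat) : measurable_fun setT (fun w => istar (Xp X w) (Xq X w) == k).
Proof.
pose F := fun g : {ffun 'I_N * 'I_N -> bool} =>
     find (fun j : 'I_N => [forall k' : 'I_N, g (j, k')]) (enum 'I_N) == k.
pose b := fun (jk : 'I_N * 'I_N) w =>
  tdist (Xq X w) (tnth (Xp X w) jk.1) <= tdist (Xq X w) (tnth (Xp X w) jk.2).
rewrite (_ : (fun w => _) = fun w => F [ffun jk => b jk w]).
  apply: (@measurable_ffun_bool _ _ _ b F) => jk; apply: measurable_fun_ler;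
  apply: mtdist; (exact: mXq || exact: mXp).
apply/funext => w /=; rewrite /istar /F; congr (find _ _ == _).
by apply/funext => j; apply: eq_forallb => k'; rewrite ffunE.
Qed.

Lemma ystarE w : ystar (Xp X w) (Yt Y w) (Xq X w) =
  \sum_(k < N) ((istar (Xp X w) (Xq X w) == k)%:R * Y k w).
Proof. by rewrite /ystar nth_sum; apply: eq_bigr => k _; rewrite tnth_mktuple. Qed.

Lemma mZ : measurable_fun setT (fun w => ystar (Xp X w) (Yt Y w) (Xq X w)).
Proof.
rewrite (_ : (fun w => _) = fun w => \sum_(k < N) ((istar (Xp X w) (Xq X w) == k)%:R * Y k w)).
  apply: measurable_sum => k; apply: measurable_funM; last exact: hYm.
  by apply: mboolR; apply: mistar.
by apply/funext => w; rewrite ystarE.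
Qed.

End Main.

Section Int.
Context (R : realType) (d N : nat) (dT : measure_display) (T : measurableType dT)
  (P : probability T R)
  (X : 'I_N.+1 -> T -> d.-tuple R) (Y : 'I_N -> T -> R).
Hypothesis hXm : forall i, measurable_fun setT (X i).
Hypothesis hYm : forall j, measurable_fun setT (Y j).
Hypothesis hint : forall i j, P.-integrable setT (fun w => (Y i w * Y j w)%:E).

Lemma absZ w : `|ystar (Xp X w) (Yt Y w) (Xq X w)| <= \sum_j `|Y j w|.
Proof.
rewrite ystarE; apply: (le_trans (ler_norm_sum _ _ _)); apply: ler_sum => k _.
by rewrite normrM; case: (_ == _); rewrite /= ?normr1 ?normr0 ?mul1r ?mul0r.
Qed.

Lemma absS w : `|\sum_j Y j w| <= \sum_j `|Y j w|.
Proof. exact: ler_norm_sum. Qed.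

Lemma sqsum w : (\sum_j `|Y j w|) ^+ 2 = \sum_i \sum_j `|Y i w * Y j w|.
Proof.
rewrite expr2 mulr_suml; apply: eq_bigr => i _; rewrite mulr_sumr.
by apply: eq_bigr => j _; rewrite normrM.
Qed.

Lemma sq_bound (u z s : R) : `|u| <= s -> `|z| <= s -> (u - z) ^+ 2 <= 4 * s ^+ 2.
Proof.
move=> /[dup] hu0 /ler_normlP[hu1 hu2] /[dup] hz0 /ler_normlP[hz1 hz2].
have s0 : 0 <= s by apply: le_trans hu0.
nra.
Qed.

Lemma absU (c : 'I_N -> R) (e : R) w :
  `|(\sum_(j < N) expR (c j) * Y j w) / (\sum_(i < N) expR (c i) + expR e)|
     <= \sum_j `|Y j w|.
Proof.
have den0 : 0 < \sum_(i < N) expR (c i) + expR e.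
  by apply: ltr_wpDl; [apply: sumr_ge0 => i _; exact: expR_ge0|exact: expR_gt0].
rewrite normrM normfV (gtr0_norm den0) ler_pdivrMr //.
apply: (le_trans (ler_norm_sum _ _ _)); rewrite mulr_suml; apply: ler_sum => j _.
rewrite normrM (gtr0_norm (expR_gt0 _)) mulrC ler_wpM2l //.
apply: (le_trans _ (ltW (ltr_pwDr (expR_gt0 e) (lexx _)))) .
by rewrite (bigD1 j) //= lerDl; apply: sumr_ge0 => i _; exact: expR_ge0.
Qed.

Lemma intG : P.-integrable setT (fun w => (\sum_i \sum_j `|Y i w * Y j w|)%:E).
Proof.
apply: (@eq_integrable _ _ _ _ _ measurableT (fun w => \sum_i \sum_j (`|Y i w * Y j w|)%:E)) => //.
  by move=> w _; rewrite -sumEFin; apply: eq_bigr => i _; rewrite sumEFin.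
apply: (@integrable_sum _ _ _ _ _ measurableT) => i _; apply: (@integrable_sum _ _ _ _ _ measurableT) => j _.
exact: (integrable_abse (hint i j)).
Qed.

Lemma int_bound (f : T -> R) : measurable_fun setT f ->
  (forall w, `|f w| <= 4 * (\sum_i \sum_j `|Y i w * Y j w|)) ->
  P.-integrable setT (fun w => (f w)%:E).
Proof.
move=> mf hf; apply: (@le_integrable _ _ _ _ _ measurableT _ (fun w => (4%:E * (\sum_i \sum_j `|Y i w * Y j w|)%:E)%E)) => //.
- by apply/measurable_EFinP.
- move=> w _; rewrite -EFinM /= lee_fin; apply: (le_trans (hf w)).
  by rewrite ler_norm.
- exact: (integrableZl _ _ intG).
Qed.

Lemma mFgen (c : 'I_N -> T -> R) (e : T -> R) :
  (forall j, measurable_fun setT (c j)) -> measurable_fun setT e ->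
  measurable_fun setT (fun w =>
    ((\sum_(j < N) expR (c j w) * Y j w) / (\sum_(i < N) expR (c i w) + expR (e w))
      - ystar (Xp X w) (Yt Y w) (Xq X w)) ^+ 2).
Proof.
move=> mc me; apply: measurable_funX; apply: measurable_funB; last exact: mZ.
apply: measurable_funM.
  apply: measurable_sum => j; apply: measurable_funM => //.
  exact: (measurableT_comp (@measurable_expR R) (mc j)).
apply: (measurableT_comp (@measurable_invR R)).
apply: measurable_funD.
  apply: measurable_sum => j.
  exact: (measurableT_comp (@measurable_expR R) (mc j)).
exact: (measurableT_comp (@measurable_expR R) me).
Qed.

Lemma iFgen (c : 'I_N -> T -> R) (e : T -> R) :
  (forall j, measurable_fun setT (c j)) -> measurable_fun setT e ->
  P.-integrable setT (fun w =>
    (((\sum_(j < N) expR (c j w) * Y j w) / (\sum_(i < N) expR (c i w) + expR (e w))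
      - ystar (Xp X w) (Yt Y w) (Xq X w)) ^+ 2)%:E).
Proof.
move=> mc me; apply: int_bound; first exact: mFgen.
move=> w; rewrite ger0_norm ?sqr_ge0 // -sqsum.
by apply: sq_bound; [exact: absU|exact: absZ].
Qed.

End Int.

Section RealL.
Variable R : realType.

Lemma conv_mono (f : R -> R) M : (forall x, `|f x| <= M) ->
  (forall s u t, 0 <= t <= 1 -> f (t * s + (1 - t) * u) <= t * f s + (1 - t) * f u) ->
  forall s t, s < t -> f t <= f s.
Proof.
move=> hM hc s t st; rewrite leNgt; apply/negP => hlt.
have M0 : 0 <= M := le_trans (normr_ge0 _) (hM 0).
set D := f t - f s.
have D0 : 0 < D by rewrite subr_gt0.
have den0 : 0 < D + 2 * M + 1 by lra.
set r := D / (D + 2 * M + 1).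
have hr : r * (D + 2 * M + 1) = D by rewrite /r mulfVK // gt_eqF.
have r0 : 0 < r by rewrite divr_gt0.
have r1 : r < 1 by rewrite /r ltr_pdivrMr // mul1r; lra.
set u := s + (t - s) / r.
have := hc s u (1 - r); rewrite (_ : (1 - r) * s + (1 - (1 - r)) * u = t); last first.
  by rewrite /u; field; rewrite gt_eqF.
have /ler_normlP [hu1 hu2] := hM u.
have /ler_normlP [hs1 hs2] := hM s.
move=> /(_ ltac:(apply/andP; split; lra)) H.
rewrite /D in D0 hr.
nra.
Qed.

Lemma conv_const (f : R -> R) M : (forall x, `|f x| <= M) ->
  (forall s u t, 0 <= t <= 1 -> f (t * s + (1 - t) * u) <= t * f s + (1 - t) * f u) ->
  forall s t, f s = f t.
Proof.
move=> hM hc.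
have m1 := conv_mono hM hc.
have m2 : forall s t, s < t -> f s <= f t.
  move=> s t st.
  have := @conv_mono (fun x => f (- x)) M (fun x => hM (- x)) _ (- t) (- s).
  rewrite !opprK; apply; try by rewrite ltrN2.
  move=> a b c hc01; rewrite (_ : - (c * a + (1 - c) * b) = c * (- a) + (1 - c) * (- b)); last by ring.
  exact: hc.
move=> s t; case: (ltgtP s t) => [st|ts|->] //.
- by apply/eqP; rewrite eq_le (m1 _ _ st) (m2 _ _ st).
- by apply/eqP; rewrite eq_le (m1 _ _ ts) (m2 _ _ ts).
Qed.

End RealL.

Section Part1.
Context (R : realType) (d N : nat) (dT : measure_display) (T : measurableType dT)
  (P : probability T R)
  (X : 'I_N.+1 -> T -> d.-tuple R) (Y : 'I_N -> T -> R).
Hypothesis hXm : forall i, measurable_fun setT (X i).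
Hypothesis hYm : forall j, measurable_fun setT (Y j).
Hypothesis hint : forall i j, P.-integrable setT (fun w => (Y i w * Y j w)%:E).
Hypothesis mnull : measurable (Xq X @^-1` [set x | dotp x x != 1]).
Hypothesis hnull : P (Xq X @^-1` [set x | dotp x x != 1]) = 0%E.

Lemma part1 xi1 xi2 :
  loss P X Y (Wdiag d xi1 xi2) = (2^-1 * calL P X Y xi1 xi2)%:E.
Proof.
have mc : forall j : 'I_N, measurable_fun setT
    (fun w => xi1 * dotp (tnth (Xp X w) j) (Xq X w)).
  move=> j; apply: measurable_funM; first exact: measurable_cst.
  by apply: mdot; [exact: mXp|exact: mXq].
have me1 : measurable_fun setT (fun w => xi1 * dotp (Xq X w) (Xq X w) - xi2).
  apply: measurable_funB; last exact: measurable_cst.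
  apply: measurable_funM; first exact: measurable_cst.
  by apply: mdot; exact: mXq.
have me2 : measurable_fun setT (fun w : T => xi1 - xi2) by exact: measurable_cst.
have fin := iFgen hXm hYm hint mc me2.
rewrite /loss /calL.
set I2 := (X in fine X).
set I1 := (X in ((2^-1)%:E * X)%E).
have -> : I1 = I2.
  transitivity (\int[P]_w
    ((((\sum_(j < N) expR (xi1 * dotp (tnth (Xp X w) j) (Xq X w)) * Y j w) /
      (\sum_(i < N) expR (xi1 * dotp (tnth (Xp X w) i) (Xq X w))
         + expR (xi1 * dotp (Xq X w) (Xq X w) - xi2))
      - ystar (Xp X w) (Yt Y w) (Xq X w)) ^+ 2)%:E))%E.
    apply: eq_integral => w _; congr (EFin ((_ - _) ^+ 2)).
    rewrite /yhat /= score_diag !mulr1.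
    congr (_ / (_ + _)); apply: eq_bigr => j _;
      by rewrite score_diag mulr0 mul0r subr0 ?tnth_mktuple mulrC.
  apply: ae_eq_integral => //.
  - by apply/measurable_EFinP; exact: (mFgen hXm hYm mc me1).
  - by apply/measurable_EFinP; exact: (mFgen hXm hYm mc me2).
  exists (Xq X @^-1` [set x | dotp x x != 1]); split => //.
  move=> w /= nh; apply/negP => /eqP h; apply: nh => _.
  by rewrite h mulr1.
have hf : I2 \is a fin_num := integrable_fin_num measurableT fin.
by rewrite -[in LHS](fineK hf) -EFinM.
Qed.

End Part1.

Section Part2.
Context (R : realType) (d N : nat) (dT : measure_display) (T : measurableType dT)
  (P : probability T R)
  (X : 'I_N.+1 -> T -> d.-tuple R) (Y : 'I_N -> T -> R).
Hypothesis hXm : forall i, measurable_fun setT (X i).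
Hypothesis hYm : forall j, measurable_fun setT (Y j).
Hypothesis hint : forall i j, P.-integrable setT (fun w => (Y i w * Y j w)%:E).
Hypothesis hE : forall i j,
  (\int[P]_w (Y i w * Y j w)%:E = (if i == j then 1 else 0)%:E)%E.

Lemma calL0 : exists B C : R, forall s,
  calL P X Y 0 s = N%:R * ((N%:R + expR (0 - s))^-1) ^+ 2
                    - 2 * B * (N%:R + expR (0 - s))^-1 + C.
Proof.
have mS : measurable_fun setT (fun w => \sum_(j < N) Y j w).
  by apply: measurable_sum => j; exact: hYm.
have mZ' := mZ hXm.
have iSS : P.-integrable setT (fun w => ((\sum_(j < N) Y j w) ^+ 2)%:E).
  apply: (int_bound hint); first exact: measurable_funX.
  move=> w; rewrite -sqsum normrX.
  apply: (le_trans (lerXn2r _ _ _ (absS Y w))); rewrite ?nnegrE //;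
    try (by apply: sumr_ge0 => *; exact: normr_ge0).
  by apply: ler_peMl; [exact: sqr_ge0|lra].
have iSZ : P.-integrable setT (fun w =>
    ((\sum_(j < N) Y j w) * ystar (Xp X w) (Yt Y w) (Xq X w))%:E).
  apply: (int_bound hint); first by apply: measurable_funM; [exact: mS|exact: mZ'].
  move=> w; rewrite -sqsum normrM expr2.
  apply: (le_trans (ler_pM _ _ (absS Y w) (absZ X Y w))) => //.
  apply: ler_peMl; last lra.
  by apply: mulr_ge0; apply: sumr_ge0 => *; exact: normr_ge0.
have iZZ : P.-integrable setT (fun w => (ystar (Xp X w) (Yt Y w) (Xq X w) ^+ 2)%:E).
  apply: (int_bound hint); first by apply: measurable_funX; exact: mZ'.
  move=> w; rewrite -sqsum normrX.
  apply: (le_trans (lerXn2r _ _ _ (absZ X Y w))); rewrite ?nnegrE //;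
    try (by apply: sumr_ge0 => *; exact: normr_ge0).
  by apply: ler_peMl; [exact: sqr_ge0|lra].
have hSS : (\int[P]_w ((\sum_(j < N) Y j w) ^+ 2)%:E = (N%:R)%:E)%E.
  transitivity (\int[P]_w (\sum_(i < N) \sum_(j < N) (Y i w * Y j w)%:E))%E.
    apply: eq_integral => w _; rewrite expr2 mulr_suml -sumEFin.
    by apply: eq_bigr => i _; rewrite mulr_sumr -sumEFin.
  rewrite integral_sum //; last first.
    by move=> i; apply: (@integrable_sum _ _ _ _ _ measurableT) => j _; exact: hint.
  transitivity (\sum_(i < N) (1 : R)%:E)%E; last by rewrite sumEFin sumr_const card_ord.
  apply: eq_bigr => i _; rewrite integral_sum //.
  under eq_bigr do rewrite hE.
  rewrite sumEFin; congr EFin; rewrite (bigD1 i) //= eqxx big1 ?addr0 //.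
  by move=> j; rewrite eq_sym => /negbTE ->.
exists (fine (\int[P]_w ((\sum_(j < N) Y j w) * ystar (Xp X w) (Yt Y w) (Xq X w))%:E)).
exists (fine (\int[P]_w (ystar (Xp X w) (Yt Y w) (Xq X w) ^+ 2)%:E)).
move=> s; set a := (N%:R + expR (0 - s))^-1.
rewrite /calL.
have i1 := integrableZl measurableT (a ^+ 2) iSS.
have i2 := integrableZl measurableT (- (2 * a)) iSZ.
have i23 := integrableD measurableT i2 iZZ.
transitivity (fine (\int[P]_w ((a ^+ 2)%:E * ((\sum_(j < N) Y j w) ^+ 2)%:E +
   ((- (2 * a))%:E * ((\sum_(j < N) Y j w) * ystar (Xp X w) (Yt Y w) (Xq X w))%:E
    + (ystar (Xp X w) (Yt Y w) (Xq X w) ^+ 2)%:E)))%E).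
  congr fine; apply: eq_integral => w _; rewrite -!EFinM -!EFinD; congr EFin.
  under eq_bigr do rewrite mul0r expR0 mul1r.
  rewrite [in X in _ / X](eq_bigr (fun _ => 1)); last by move=> i _; rewrite mul0r expR0.
  rewrite sumr_const card_ord /a; ring.
rewrite (integralD measurableT i1 i23) (integralD measurableT i2 iZZ).
rewrite (integralZl measurableT iSS) (integralZl measurableT iSZ) hSS.
rewrite -(fineK (integrable_fin_num measurableT iSZ)).
rewrite -(fineK (integrable_fin_num measurableT iZZ)).
rewrite -!EFinM -!EFinD /=; ring.
Qed.

Lemma part2 (hN : (0 < N)%N) :
  ~ convex_function setT (fun v : 'rV[R]_2 => calL P X Y (v 0 0) (v 0 1)).
Proof.
move=> hconv.
have [B [C hf]] := calL0.
pose f s := calL P X Y 0 s.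
have hc : forall s u t, 0 <= t <= 1 ->
    f (t * s + (1 - t) * u) <= t * f s + (1 - t) * f u.
  move=> s u t /andP[t0 t1].
  pose rv (x : R) : convex_lmodType 'rV[R]_2 := \row_(j < 2) (if j == 0 then 0 else x).
  have := hconv (Itv01 t0 t1) (rv s) (rv u) (in_setT _) (in_setT _).
  rewrite convRE /=.
  have -> : conv (Itv01 t0 t1) (rv s) (rv u) = t *: rv s + (1 - t) *: rv u :> 'rV[R]_2 by [].
  rewrite /rv !mxE /=.
  by rewrite !mulr0 addr0.
have Nge1 : 1 <= N%:R :> R by rewrite ler1n.
have ha : forall s : R, 0 < (N%:R + expR (0 - s))^-1 < 1.
  move=> s; have e0 := expR_gt0 (0 - s).
  have h1 : 1 < N%:R + expR (0 - s) by lra.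
  by rewrite invr_gt0 invf_lt1 ?h1 ?andbT //; lra.
have amono : forall s t : R, s < t -> (N%:R + expR (0 - s))^-1 < (N%:R + expR (0 - t))^-1.
  move=> s t st; have e0 := expR_gt0 (0 - s); have e1 := expR_gt0 (0 - t).
  rewrite ltf_pV2 ?posrE; try lra.
  by rewrite ltrD2l ltr_expR; lra.
have /ler_normlP [hB1 hB2] := lexx `|B|.
have /ler_normlP [hC1 hC2] := lexx `|C|.
have hM : forall s : R, `|f s| <= N%:R + 2 * `|B| + `|C|.
  move=> s; rewrite /f hf; have /andP[x0 x1] := ha s.
  move: x0 x1; set x := (N%:R + expR (0 - s))^-1 => x0 x1.
  have nB : 0 <= `|B| by [].
  have bx1 : B * x <= `|B| by nra.
  have bx2 : - `|B| <= B * x by nra.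
  have xx : x * x <= 1 by nra.
  have nx1 : N%:R * x ^+ 2 <= N%:R by rewrite expr2 ler_piMr //; lra.
  have nx2 : 0 <= N%:R * x ^+ 2 by rewrite expr2; nra.
  apply/ler_normlP; split; lra.
have hconst := conv_const hM hc.
have e1 := hconst 0 1; have e2 := hconst 0 2.
rewrite /f !hf in e1 e2.
have a01 := amono 0 1 ltr01.
have a02 := amono 0 2 ltac:(lra).
have a12 := amono 1 2 ltac:(lra).
move: e1 e2 a01 a02 a12.
set a0 := (N%:R + expR (0 - 0))^-1.
set a1 := (N%:R + expR (0 - 1))^-1.
set a2 := (N%:R + expR (0 - 2))^-1.
move=> e1 e2 a01 a02 a12.
have k1 : N%:R * (a0 + a1) = 2 * B.
  have h : (a1 - a0) * (N%:R * (a0 + a1) - 2 * B) = 0.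
    transitivity ((N%:R * a1 ^+ 2 - 2 * B * a1 + C) - (N%:R * a0 ^+ 2 - 2 * B * a0 + C)).
      by ring.
    by rewrite -e1 subrr.
  move/eqP: h; rewrite mulf_eq0 subr_eq0 (gt_eqF a01) /= subr_eq0 => /eqP //.
have k2 : N%:R * (a0 + a2) = 2 * B.
  have h : (a2 - a0) * (N%:R * (a0 + a2) - 2 * B) = 0.
    transitivity ((N%:R * a2 ^+ 2 - 2 * B * a2 + C) - (N%:R * a0 ^+ 2 - 2 * B * a0 + C)).
      by ring.
    by rewrite -e2 subrr.
  move/eqP: h; rewrite mulf_eq0 subr_eq0 (gt_eqF a02) /= subr_eq0 => /eqP //.
nra.
Qed.

End Part2.

Lemma sphere_null (R : realType) d :
  sphere_unif [set x : d.-tuple R | dotp x x != 1] = 0%E.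
Proof.
rewrite /sphere_unif (_ : cone _ = set0); last first.
  apply/seteqP; split => x // [/andP[h0 _]] /=.
  by rewrite dotp_normalize // eqxx.
have -> : (fun x : d.-tuple R => ((\1_(@set0 (d.-tuple R)) x : R)%:E)) = fun _ => (0:R)%:E.
  by apply: funext => x; rewrite indic0.
by rewrite iint0 mul0e.
Qed.

Lemma mnotsphere (R : realType) d :
  measurable [set x : d.-tuple R | dotp x x != 1].
Proof.
have mf : measurable_fun setT (fun x : d.-tuple R => dotp x x != 1).
  apply: measurable_neg; apply: measurable_fun_eqr; last exact: measurable_cst.
  by apply: mdot; exact: measurable_id.
have := mf measurableT [set true] I.
by rewrite setTI.
Qed.

Unset Implicit Arguments.
Theorem lemma3 (R : realType) (d N : nat) (hd : (0 < d)%N) (hN : (0 < N)%N)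
  (dT : measure_display) (T : measurableType dT) (P : probability T R)
  (X : 'I_N.+1 -> T -> d.-tuple R) (Y : 'I_N -> T -> R)
  (hXm : forall i, measurable_fun setT (X i))
  (hYm : forall j, measurable_fun setT (Y j))
  (* x_1, ..., x_{N+1} i.i.d. uniform on S^{d-1} *)
  (hiid : forall A : 'I_N.+1 -> set (d.-tuple R), (forall i, measurable (A i)) ->
     P (\bigcap_(i in [set: 'I_N.+1]) (X i @^-1` A i)) =
     (\prod_(i < N.+1) sphere_unif (A i))%E)
  (* the query x_{N+1} is independent of the prompt (x_{1:N}, y_{1:N}) *)
  (hq : forall (B : set (N.-tuple (d.-tuple R) * N.-tuple R)) (A : set (d.-tuple R)),
     measurable B -> measurable A ->
     P ([set w | B (Xp X w, Yt Y w)] `&` (Xq X @^-1` A)) =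
     (P [set w | B (Xp X w, Yt Y w)] * sphere_unif A)%E)
  (* E[y_i y_j | x_{1:N}] = delta_ij *)
  (hint : forall i j, P.-integrable setT (fun w => (Y i w * Y j w)%:E))
  (hcond : forall i j (B : set (N.-tuple (d.-tuple R))), measurable B ->
     (\int[P]_(w in Xp X @^-1` B) (Y i w * Y j w)%:E =
      (if i == j then 1 else 0)%:E * P (Xp X @^-1` B))%E)
  (* P(y_{1:N} | x_{1:N}) = P(y_{1:N} | -x_{1:N}) *)
  (hsym : forall (B : set (N.-tuple (d.-tuple R))) (C : set (N.-tuple R)),
     measurable B -> measurable C ->
     P (Xp X @^-1` B `&` Yt Y @^-1` C) = P (XpN X @^-1` B `&` Yt Y @^-1` C)) :
  (forall xi1 xi2 : R,
     loss P X Y (Wdiag d xi1 xi2) = (2^-1 * calL P X Y xi1 xi2)%:E) /\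
  ~ convex_function setT (fun v : 'rV[R]_2 => calL P X Y (v 0 0) (v 0 1)).
Proof.
have mA := @mnotsphere R d.
have mN : measurable (Xq X @^-1` [set x : d.-tuple R | dotp x x != 1]).
  by have := hXm ord_max measurableT _ mA; rewrite setTI.
have hN0 : P (Xq X @^-1` [set x : d.-tuple R | dotp x x != 1]) = 0%E.
  have := hq setT _ measurableT mA.
  rewrite (_ : [set w | setT (Xp X w, Yt Y w)] = setT) // setTI => ->.
  by rewrite sphere_null mule0.
have hE : forall i j,
    (\int[P]_w (Y i w * Y j w)%:E = (if i == j then 1 else 0)%:E)%E.
  move=> i j; have := hcond i j setT measurableT.
  by rewrite preimage_setT probability_setT mule1.
split.
- move=> xi1 xi2; exact: (part1 hXm hYm hint mN hN0).
- exact: (part2 hXm hYm hint hE hN).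
Qed.
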